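(* Let $k\geq 2$ be an integer and let $F_k(x,t)=\sum_{n\geq 0}\sum_{w\in[k]^n} t^{\mathrm{s}(w)}x^n$. Put $\phi=\dfrac{1-x(t-1)}{2x(t-1)}$ and \[\gamma(x,t)=\frac{k}{1-3x(t-1)}-\frac{2x(t-1)}{(1-3x(t-1))^{2}}\cdot\frac{U_{k}(\phi)-U_{k-1}(\phi)-1}{U_{k}(\phi)}.\] Then \[F_k(x,t)=\frac{1}{1-x\gamma(x,t)}.\]
   Context: For an integer $k\geq 2$, $[k]=\{1,2,\ldots,k\}$ and a word over $k$ of length $n$ is an element $w=w_1\cdots w_n\in[k]^n$ ($[k]^0$ consists of the empty word). For such $w$, $\mathrm{s}(w)$ is the number of indices $1\leq i\leq n-1$ with $|w_{i+1}-w_i|\leq 1$ (so $\mathrm{s}(w)=0$ if $n\leq 1$). $U_n$ denotes the Chebyshev polynomial of the second kind: $U_0(x)=1$, $U_1(x)=2x$, $U_{n+1}(x)=2xU_n(x)-U_{n-1}(x)$. The identity is an identity of rational functions in $x,t$ (equivalently of formal power series in $x$ with coefficients polynomial in $t$). *)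

(* Defs.v *)
From HB Require Import structures.
From mathcomp Require Import all_boot all_order all_algebra.
From mathcomp Require Import all_classical all_reals all_analysis.
Set Implicit Arguments. Unset Strict Implicit. Unset Printing Implicit Defensive.
Import Order.TTheory GRing.Theory Num.Theory.
Local Open Scope ring_scope.

(* Words of length n over the alphabet [k] are encoded as finite functions
   'I_n -> 'I_k (letters 0..k-1 instead of 1..k; only differences of
   consecutive letters matter, so s(w) is unchanged by this shift). *)

Definition letter (k n : nat) (w : {ffun 'I_n -> 'I_k}) (i : nat) : nat :=
  nth 0%N [seq nat_of_ord (w j) | j <- enum 'I_n] i.

(* s(w) = #{ 1 <= i <= n-1 : |w_{i+1} - w_i| <= 1 } ; here 0-based: i < n-1 *)
Definition sstat (k n : nat) (w : {ffun 'I_n -> 'I_k}) : nat :=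
  \sum_(i < n.-1) ((`|(letter w i.+1)%:Z - (letter w i)%:Z|%N <= 1)%N : nat).

Definition Fcoef (R : ringType) (k n : nat) (t : R) : R :=
  \sum_(w : {ffun 'I_n -> 'I_k}) t ^+ sstat w.

Fixpoint chebU (R : ringType) (n : nat) (x : R) : R :=
  match n with
  | 0 => 1
  | S m => match m with
           | 0 => 2 * x
           | S p => 2 * x * chebU m x - chebU p x
           end
  end.

(* Main.v *)
Require Import Defs.
From HB Require Import structures.
From mathcomp Require Import all_boot all_order all_algebra.
From mathcomp Require Import all_classical all_reals all_analysis.
From mathcomp Require Import ring lra.
Import Order.TTheory GRing.Theory Num.Theory numFieldNormedType.Exports.
Set Implicit Arguments. Unset Strict Implicit. Unset Printing Implicit Defensive.
Local Open Scope ring_scope.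

Definition closeb (a b : nat) : bool := (`|a%:Z - b%:Z|%N <= 1)%N.

Lemma close_sym a b : closeb a b = closeb b a.
Proof. by rewrite /closeb distnC. Qed.

Lemma letterE k n (w : {ffun 'I_n -> 'I_k}) i (Hi : (i < n)%N) :
  letter w i = w (Ordinal Hi).
Proof.
rewrite /letter (nth_map (Ordinal Hi)) ?size_enum_ord //.
congr (nat_of_ord (w _)); apply: val_inj => /=.
by rewrite nth_enum_ord.
Qed.

Definition ext k n (u : {ffun 'I_n -> 'I_k}) (c : 'I_k) : {ffun 'I_n.+1 -> 'I_k} :=
  [ffun j : 'I_n.+1 => if insub (val j) is Some j' then u j' else c].

Lemma ext_max k n (u : {ffun 'I_n -> 'I_k}) c : ext u c ord_max = c.
Proof. by rewrite /ext ffunE insubF //= ltnn. Qed.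

Lemma ext_lt k n (u : {ffun 'I_n -> 'I_k}) c (j : 'I_n.+1) (Hj : (j < n)%N) :
  ext u c j = u (Ordinal Hj).
Proof. by rewrite /ext ffunE insubT. Qed.

Definition unext k n (w : {ffun 'I_n.+1 -> 'I_k}) : {ffun 'I_n -> 'I_k} * 'I_k :=
  ([ffun j : 'I_n => w (widen_ord (leqnSn n) j)], w ord_max).

Lemma ext_bij k n : bijective (fun p : {ffun 'I_n -> 'I_k} * 'I_k => ext p.1 p.2).
Proof.
exists (@unext k n).
- move=> [u c] /=; rewrite /unext ext_max; congr pair.
  apply/ffunP => j; rewrite ffunE.
  have Hj : ((widen_ord (leqnSn n) j) < n)%N by rewrite /= ltn_ord.
  by rewrite (ext_lt _ _ Hj); congr (u _); apply: val_inj.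
- move=> w /=; apply/ffunP => j.
  case: (ltnP j n) => Hj.
  + by rewrite (ext_lt _ _ Hj) ffunE; congr (w _); apply: val_inj.
  + have -> : j = ord_max by apply: val_inj => /=; apply/eqP; rewrite eqn_leq Hj -ltnS ltn_ord.
    by rewrite ext_max.
Qed.

Lemma sum_ext (R : nmodType) k n (F : {ffun 'I_n.+1 -> 'I_k} -> R) :
  \sum_w F w = \sum_(u : {ffun 'I_n -> 'I_k}) \sum_(c : 'I_k) F (ext u c).
Proof.
rewrite pair_bigA /= (reindex (fun p : {ffun 'I_n -> 'I_k} * 'I_k => ext p.1 p.2)) //.
exact: onW_bij (ext_bij k n).
Qed.

Lemma sstat_ext k n (u : {ffun 'I_n.+1 -> 'I_k}) c :
  sstat (ext u c) = (sstat u + closeb c (u ord_max))%N.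
Proof.
rewrite /sstat /= big_ord_recr /=; congr addn.
- apply: eq_bigr => i _.
  have H1 : (i.+1 < n.+1)%N by rewrite ltnS ltn_ord.
  have H2 : (i < n.+1)%N by rewrite ltnW.
  have H1' : (i.+1 < n.+2)%N by rewrite ltnS ltnW.
  have H2' : (i < n.+2)%N by rewrite ltnW // ltnW.
  rewrite (letterE _ H1) (letterE _ H2) (letterE _ H1') (letterE _ H2').
  by rewrite (@ext_lt _ _ u c (Ordinal H1') H1) (@ext_lt _ _ u c (Ordinal H2') H2).
- have H1 : (n.+1 < n.+2)%N by [].
  have H2 : (n < n.+2)%N by rewrite ltnW.
  rewrite (letterE _ H1) (letterE _ H2) /closeb.
  have -> : Ordinal H1 = ord_max by apply: val_inj.
  rewrite ext_max (@ext_lt _ _ u c (Ordinal H2) (ltnSn n)).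
  by congr (_ <= _)%N; congr (`|_ - _|%N); do 2 congr (Posz (nat_of_ord _)); congr (u _); apply: val_inj.
Qed.

Lemma sum_eq1 (R : semiRingType) (T : finType) (a : T) (F : T -> R) :
  \sum_i (a == i)%:R * F i = F a.
Proof.
rewrite (bigD1 a) //= eqxx mul1r big1 ?addr0 // => i.
by rewrite eq_sym => /negbTE ->; rewrite mul0r.
Qed.

Section Comb.
Variables (R : realType) (k : nat) (t : R).

Definition vv (n : nat) (i : 'I_k) : R :=
  \sum_(w : {ffun 'I_n.+1 -> 'I_k}) (w ord_max == i)%:R * t ^+ sstat w.

Definition AA (i j : 'I_k) : R := t ^+ closeb i j.

Lemma Fcoef0 : Fcoef k 0 t = 1.
Proof.
rewrite /Fcoef (eq_bigr (fun _ => 1)); last by move=> w _; rewrite /sstat big_ord0.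
by rewrite sumr_const card_ffun !card_ord.

Qed.

Lemma FcoefS n : Fcoef k n.+1 t = \sum_i vv n i.
Proof.
rewrite /Fcoef /vv exchange_big /=; apply: eq_bigr => w _.
by rewrite sum_eq1.
Qed.

Lemma vv0 i : vv 0 i = 1.
Proof.
rewrite /vv sum_ext (eq_bigr (fun _ => 1)).
  by rewrite sumr_const card_ffun !card_ord.

move=> u _; rewrite (eq_bigr (fun c => (i == c)%:R * 1)) ?sum_eq1 //.
move=> c _; rewrite ext_max /sstat big_ord0 expr0 eq_sym; done.
Qed.

Lemma vvS n i : vv n.+1 i = \sum_j AA i j * vv n j.
Proof.
rewrite /vv sum_ext.
under eq_bigr => u _.
  rewrite (eq_bigr (fun c => (i == c)%:R * (t ^+ sstat u * t ^+ closeb c (u ord_max)))); last first.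
    by move=> c _; rewrite ext_max sstat_ext exprD eq_sym.
  rewrite sum_eq1.
  over.
rewrite /=.
under [RHS]eq_bigr => j _ do rewrite mulr_sumr.
rewrite exchange_big /=; apply: eq_bigr => u _.
rewrite (eq_bigr (fun j => (u ord_max == j)%:R * (AA i j * t ^+ sstat u))); last first.
  by move=> j _; rewrite mulrCA.
by rewrite sum_eq1 /AA mulrC.
Qed.

End Comb.

Lemma close_split (i j : nat) :
  (closeb i j : nat) = ((j.+1 == i) + (j == i) + (j == i.+1))%N.
Proof.
rewrite /closeb.
case: (ltngtP i j) => H.
- rewrite distnEr; last exact: ltnW.
  rewrite (gtn_eqF (leq_trans H (leqnSn _))).
  by rewrite leq_subLR addn1 [(j == i.+1)]eqn_leq H andbT.
- rewrite distnEl; last exact: ltnW.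
  rewrite (ltn_eqF (leq_trans H (leqnSn _))).
  by rewrite leq_subLR addn1 [(j.+1 == i)]eqn_leq H /= !addn0.
- rewrite -H distnn (gtn_eqF (ltnSn i)).
  by rewrite (ltn_eqF (ltnSn i)).
Qed.

Lemma sum_eqn (R : semiRingType) k m (F : nat -> R) :
  \sum_(j < k) (nat_of_ord j == m)%:R * F j = if (m < k)%N then F m else 0.
Proof.
case: ltnP => Hm.
- rewrite (bigD1 (Ordinal Hm)) //= eqxx mul1r big1 ?addr0 // => j Hj.
  have -> : (nat_of_ord j == m) = false.
    by apply/negbTE; apply: contra Hj => /eqP Hjm; apply/eqP; apply: val_inj.
  by rewrite mul0r.
- rewrite big1 // => j _.
  by rewrite (ltn_eqF (leq_trans (ltn_ord j) Hm)) mul0r.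
Qed.

Lemma tri_sum (R : semiRingType) k (f : nat -> R) (i : nat) :
  f 0%N = 0 -> f k.+1 = 0 -> (i < k)%N ->
  \sum_(j < k) (closeb i j)%:R * f j.+1 = f i + f i.+1 + f i.+2.
Proof.
move=> f0 fk ik.
rewrite (eq_bigr (fun j : 'I_k => ((nat_of_ord j == i.-1) && (0 < i)%N)%:R * f j.+1 + (nat_of_ord j == i)%:R * f j.+1 + (nat_of_ord j == i.+1)%:R * f j.+1)); last first.
  move=> j _; rewrite close_split !natrD !mulrDl; congr (_ + _ + _).
  congr (_%:R * _); case: i ik {f0 fk} => [|i] ik /=; first by rewrite andbF.
  by rewrite andbT eqSS.
rewrite !big_split /=.
rewrite (sum_eqn k i (fun j => f j.+1)) (sum_eqn k i.+1 (fun j => f j.+1)) ik.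
congr (_ + _ + _).
- case: i ik => [|i] ik /=.
  + by rewrite big1 ?f0 // => j _; rewrite andbF mul0r.
  + rewrite (eq_bigr (fun j : 'I_k => (nat_of_ord j == i)%:R * f j.+1)); last by move=> j _; rewrite andbT.
    by rewrite (sum_eqn k i (fun j => f j.+1)) ltnW.
- case: ltnP => H //; have Ek : i.+1 = k by apply/eqP; rewrite eqn_leq ik H.
  by rewrite -Ek in fk; rewrite fk.
Qed.

Lemma shift_sum (R : nmodType) k (f : nat -> R) :
  \sum_(i < k) f i + f k = f 0%N + \sum_(i < k) f i.+1.
Proof.
transitivity (\sum_(i < k.+1) f i); first by rewrite big_ord_recr.
by rewrite big_ord_recl.
Qed.

Lemma chebUSS (R : ringType) n (z : R) : chebU n.+2 z = 2 * z * chebU n.+1 z - chebU n z.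
Proof. by []. Qed.

Lemma alg_rec (R : comRingType) (y phi c a A B C D : R) :
  2 * phi * y = 1 - y -> c * (1 - 3 * y) = 1 ->
  c + a * (A + B) = 1 + y * ((c + a * (C + (2 * phi * B - D))) + (c + a * (A + B))
                             + (c + a * ((2 * phi * A - C) + D))).
Proof.
move=> e1 e2; apply/eqP; rewrite -subr_eq0; apply/eqP.
transitivity ((c * (1 - 3 * y) - 1) - a * (A + B) * (2 * phi * y - (1 - y))); first by ring.
by rewrite e1 e2 !subrr mulr0 subr0.
Qed.

Lemma alg_sum (R : fieldType) (y K T Uk Uk1 : R) :
  1 - 3 * y != 0 -> Uk != 0 ->
  T = K + y * ((T - ((1 - 3 * y)^-1 + (- (1 - 3 * y)^-1 / Uk) * (1 + Uk1)))
              + T + (T - ((1 - 3 * y)^-1 + (- (1 - 3 * y)^-1 / Uk) * (1 + Uk1)))) ->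
  T = K / (1 - 3 * y) - 2 * y / (1 - 3 * y) ^+ 2 * ((Uk - Uk1 - 1) / Uk).
Proof.
move=> h3 hU E.
set H1 := (1 - 3 * y)^-1 + (- (1 - 3 * y)^-1 / Uk) * (1 + Uk1) in E.
have E' : T = (K - 2 * y * H1) / (1 - 3 * y).
  apply: (mulIf h3); rewrite divfK //.
  apply/eqP; rewrite -subr_eq0; apply/eqP.
  transitivity (T - (K + y * ((T - H1) + T + (T - H1)))); first by ring.
  by rewrite -E subrr.
rewrite E' /H1; field; by rewrite h3 hU.
Qed.

Lemma tele (R : realFieldType) k (y : R) (f : nat -> R) :
  (forall m, (m < k)%N -> f m.+1 = 1 + y * (f m + f m.+1 + f m.+2)) ->
  let T := \sum_(i < k) f i.+1 in
  T = k%:R + y * ((T + f 0%N - f k) + T + (T - f 1%N + f k.+1)).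
Proof.
move=> Hf T.
rewrite {1}/T (eq_bigr (fun i : 'I_k => 1 + y * (f i + f i.+1 + f i.+2))); last first.
  by move=> i _; exact: Hf (ltn_ord i).
rewrite big_split /= sumr_const card_ord -mulr_sumr !big_split /=.
have s1 : \sum_(i < k) f i = T + f 0%N - f k.
  have h := shift_sum k f; rewrite -/T in h; lra.
have s2 : \sum_(i < k) f i.+2 = T - f 1%N + f k.+1.
  have h := shift_sum k (fun i => f i.+1); rewrite /= -/T in h; lra.
by rewrite s1 s2.
Qed.

Section Cheb.
Variables (R : realFieldType) (k : nat) (y : R).
Hypotheses (hk : (2 <= k)%N) (hy : y != 0) (h3 : 1 - 3 * y != 0).

Let phi := (1 - y) / (2 * y).
Let c := (1 - 3 * y)^-1.
Let U n := chebU n phi.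
Definition VV n := if n is m.+1 then U m else 0.
Hypothesis hU : U k != 0.
Let a := - c / U k.
Definition HH j := c + a * (VV j + VV (k.+1 - j)%N).

Lemma VV_rec n : VV n.+2 = 2 * phi * VV n.+1 - VV n.
Proof. case: n => [|n] /=; first by rewrite /U /= subr0 mulr1. by rewrite /U chebUSS. Qed.

Lemma HH0 : HH 0 = 0.
Proof. rewrite /HH subn0 /= add0r /a; field; done. Qed.

Lemma HHk : HH k.+1 = 0.
Proof. rewrite /HH subnn /= addr0 /a; field; done. Qed.

Lemma HH_rec m : (m < k)%N -> HH m.+1 = 1 + y * (HH m + HH m.+1 + HH m.+2).
Proof.
move=> mk.
case Hkm: (k - m)%N => [|p]; first by move/eqP: Hkm; rewrite subn_eq0 leqNgt mk.
have e1 : (k.+1 - m = p.+2)%N by rewrite (subSn (ltnW mk)) Hkm.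
have e2 : (k.+1 - m.+1 = p.+1)%N by rewrite subSS Hkm.
have e3 : (k.+1 - m.+2 = p)%N by rewrite subSS subnS Hkm.
rewrite /HH e1 e2 e3 !VV_rec; apply: alg_rec.
  by rewrite /phi; field.
by rewrite /c mulrC divff.

Qed.

Definition gam := k%:R / (1 - 3 * y)
                   - 2 * y / (1 - 3 * y) ^+ 2
                     * ((U k - U k.-1 - 1) / U k).

Lemma sumHH : \sum_(i < k) HH i.+1 = gam.
Proof.
set T := \sum_(i < k) HH i.+1.
have E := tele HH_rec.
move: E; rewrite /= -/T HH0 HHk !addr0.
have Hk1 : HH k = HH 1.
  by rewrite /HH subSS subn0 (subSn (leqnn k)) subnn (addrC (VV k)).
have VVk : VV k = U k.-1 by case: (k) hk.
rewrite Hk1 /HH subSS subn0 /= VVk /a /c /gam.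
exact: alg_sum.
Qed.

End Cheb.

From HB Require Import structures.
From mathcomp Require Import all_boot all_order all_algebra.
From mathcomp Require Import all_classical all_reals all_analysis.
From mathcomp Require Import ring lra.
Import Order.TTheory GRing.Theory Num.Theory numFieldNormedType.Exports.
Set Implicit Arguments. Unset Strict Implicit. Unset Printing Implicit Defensive.
Local Open Scope ring_scope.

Lemma cheb_mono (R : realFieldType) (z : R) : 1 <= `|z| ->
  forall n, 1 <= `|chebU n z| <= `|chebU n.+1 z|.
Proof.
move=> hz; elim => [|n /andP [IH1 IH2]].
- rewrite /= normr1 lexx /= normrM normr_nat; lra.
- apply/andP; split; first exact: le_trans IH1 IH2.
  rewrite chebUSS.
  have h := lerB_dist (2 * z * chebU n.+1 z) (chebU n z).
  rewrite !normrM normr_nat in h.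
  have h2 : `|chebU n.+1 z| <= `|z| * `|chebU n.+1 z|.
    by rewrite ler_peMl // normr_ge0.
  lra.
Qed.

Lemma cheb_le (R : realFieldType) (z : R) : 1 <= `|z| ->
  forall n m, (n <= m)%N -> `|chebU n z| <= `|chebU m z|.
Proof.
move=> hz n m /subnK <-; elim: (m - n)%N => [|d IH]; first by rewrite add0n lexx.
apply: le_trans IH _; rewrite addSn.
by case/andP: (cheb_mono hz (d + n)).
Qed.

Lemma cheb_ge1 (R : realFieldType) (z : R) n : 1 <= `|z| -> 1 <= `|chebU n z|.
Proof. by move=> hz; case/andP: (cheb_mono hz n). Qed.

Lemma HH_bound (R : realFieldType) k (y : R) :
  1 <= `|(1 - y) / (2 * y)| -> chebU k ((1 - y) / (2 * y)) != 0 ->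
  forall i, (i < k)%N -> `|HH k y i.+1| <= 3 * `|(1 - 3 * y)^-1|.
Proof.
move=> hphi hU i ik.
set phi := (1 - y) / (2 * y) in hphi hU *.
set c := (1 - 3 * y)^-1.
rewrite /HH /= -/phi -/c subSS.
case Hki: (k - i)%N => [|p]; first by move/eqP: Hki; rewrite subn_eq0 leqNgt ik.
rewrite /=.
have hpk : (p <= k)%N by have := leq_subr i k; rewrite Hki => /ltnW.
have hik : (i <= k)%N by exact: ltnW.
have hA := cheb_le hphi hik.
have hB := cheb_le hphi hpk.
set A := chebU i phi in hA *; set B := chebU p phi in hB *; set Uk := chebU k phi in hU hA hB *.
have hUk : 0 < `|Uk| by rewrite normr_gt0.
apply: le_trans (ler_normD _ _) _.
rewrite normrM normrM normrN (normfV Uk).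
have hAB : `|A + B| <= 2 * `|Uk|.
  apply: le_trans (ler_normD _ _) _; lra.
have : `|Uk|^-1 * `|A + B| <= 2.
  by rewrite ler_pdivrMl // mulrC.
have hc : 0 <= `|c| by exact: normr_ge0.
move=> h; rewrite -mulrA.
have : `|c| * (`|Uk|^-1 * `|A + B|) <= `|c| * 2 by exact: ler_wpM2l.
move=> h2; lra.
Qed.

Lemma alg_g (R : comRingType) (x t L g H0 H1 H2 : R) :
  L * (1 - x * g) = 1 -> H1 = 1 + x * (t - 1) * (H0 + H1 + H2) ->
  x * L * H1 = x + x * (x * L * g + (t - 1) * (x * L * H0 + x * L * H1 + x * L * H2)).
Proof.
move=> e1 e2; rewrite {1}e2; apply/eqP; rewrite -subr_eq0; apply/eqP.
transitivity (x * (L * (1 - x * g) - 1)); first by ring.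
by rewrite e1 subrr mulr0.
Qed.

Lemma AA_split (R : realType) k (t : R) (i j : 'I_k) :
  AA t i j = 1 + (t - 1) * (closeb i j)%:R.
Proof. by rewrite /AA; case: (closeb i j); rewrite ?mulr1 ?mulr0 ?addr0 ?expr0 ?expr1 // addrC subrK. Qed.

Lemma AA_bound (R : realType) k (t : R) (i j : 'I_k) : `|AA t i j| <= 1 + `|t|.
Proof.
rewrite /AA; case: (closeb i j); rewrite ?expr0 ?expr1 ?normr1.
- by rewrite lerDr.
- by rewrite lerDl normr_ge0.
Qed.

Section Main.
Variables (R : realType) (k : nat) (t x : R).
Let y := x * (t - 1).
Hypotheses (hk : (1 < k)%N) (hy : y != 0) (h3 : 1 - 3 * y != 0)
  (hU : chebU k ((1 - y) / (2 * y)) != 0) (hL : 1 - x * gam k y != 0).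

Let L := (1 - x * gam k y)^-1.

Definition PP N (i : 'I_k) := \sum_(n < N) vv t n i * x ^+ n.+1.
Definition gg (i : 'I_k) := x * L * HH k y i.+1.
Definition ee N i := gg i - PP N i.

Lemma PP_rec N i : PP N.+1 i = x + x * \sum_j AA t i j * PP N j.
Proof.
rewrite /PP big_ord_recl /= vv0 mul1r expr1; congr (x + _).
rewrite mulr_sumr.
under [RHS]eq_bigr => j _ do rewrite mulr_sumr mulr_sumr.
rewrite [RHS]exchange_big /=; apply: eq_bigr => n _.
rewrite /bump /= add1n vvS mulr_suml; apply: eq_bigr => j _.
by rewrite exprS; ring.
Qed.

Lemma LE : L * (1 - x * gam k y) = 1.
Proof. by rewrite /L mulVf. Qed.

Lemma gg_rec i : gg i = x + x * \sum_j AA t i j * gg j.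
Proof.
under eq_bigr do rewrite AA_split mulrDl mul1r -mulrA.
rewrite big_split /=.
have s1 : \sum_j gg j = x * L * gam k y.
  by rewrite /gg -mulr_sumr (sumHH hk hy h3 hU).
have f0 : (fun m => x * L * HH k y m) 0%N = 0 by rewrite /= (HH0 hU) mulr0.
have fk : (fun m => x * L * HH k y m) k.+1 = 0 by rewrite /= (HHk hU) mulr0.
have s2 := @tri_sum R k (fun m => x * L * HH k y m) i f0 fk (ltn_ord i).
rewrite /= in s2.
rewrite s1 -mulr_sumr /gg s2.
apply: alg_g; first exact: LE.
exact: HH_rec hy h3 _ (ltn_ord i).
Qed.

Lemma ee_rec N i : ee N.+1 i = x * \sum_j AA t i j * ee N j.
Proof.
rewrite /ee PP_rec {1}(gg_rec i).
under [in RHS]eq_bigr do rewrite mulrBr.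
rewrite sumrB; ring.
Qed.

Let a0 := 1 + `|t|.
Let B := \sum_j `|gg j|.

Lemma ee_bound N i : `|ee N i| <= (`|x| * k%:R * a0) ^+ N * B.
Proof.
elim: N i => [|N IH] i.
- rewrite expr0 mul1r /ee /PP big_ord0 subr0 /B (bigD1 i) //= lerDl.
  by apply: sumr_ge0 => j _; exact: normr_ge0.
- rewrite ee_rec normrM.
  apply: le_trans (ler_wpM2l (normr_ge0 x) (ler_norm_sum _ _ _)) _.
  have : \sum_j `|AA t i j * ee N j| <= \sum_(j < k) (a0 * ((`|x| * k%:R * a0) ^+ N * B)).
    apply: ler_sum => j _; rewrite normrM.
    apply: ler_pM; [exact: normr_ge0 | exact: normr_ge0 | exact: AA_bound | exact: IH].
  move=> h; apply: le_trans (ler_wpM2l (normr_ge0 x) h) _.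
  rewrite sumr_const card_ord -mulr_natl exprSr.
  rewrite le_eqVlt; apply/orP; left; apply/eqP; ring.
Qed.

Let SS N := \sum_(n < N) Fcoef k n t * x ^+ n.

Lemma SS_err N : L - SS N.+1 = \sum_i ee N i.
Proof.
rewrite /SS big_ord_recl Fcoef0 expr0 mulr1.
have -> : \sum_(i < N) Fcoef k (bump 0 i) t * x ^+ bump 0 i = \sum_i PP N i.
  rewrite /PP exchange_big /=; apply: eq_bigr => n _.
  by rewrite /bump /= add1n FcoefS mulr_suml.
rewrite /ee sumrB.
have -> : \sum_i gg i = x * L * gam k y by rewrite /gg -mulr_sumr (sumHH hk hy h3 hU).
have := LE; set G := gam k y => hLE.
apply/eqP; rewrite -subr_eq0; apply/eqP.
transitivity (L * (1 - x * G) - 1); first by ring.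
by rewrite hLE subrr.
Qed.

Lemma SS_bound N : `|L - SS N.+1| <= k%:R * ((`|x| * k%:R * a0) ^+ N * B).
Proof.
rewrite SS_err; apply: le_trans (ler_norm_sum _ _ _) _.
have : \sum_(i < k) `|ee N i| <= \sum_(i < k) ((`|x| * k%:R * a0) ^+ N * B).
  by apply: ler_sum => i _; exact: ee_bound.
by move=> h; apply: le_trans h _; rewrite sumr_const card_ord mulr_natl.
Qed.

End Main.

Lemma gam_bound (R : realFieldType) k (y : R) :
  (1 < k)%N -> y != 0 -> 1 - 3 * y != 0 ->
  1 <= `|(1 - y) / (2 * y)| -> chebU k ((1 - y) / (2 * y)) != 0 ->
  `|gam k y| <= k%:R * (3 * `|(1 - 3 * y)^-1|).
Proof.
move=> hk hy h3 hphi hU.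
rewrite -(sumHH hk hy h3 hU); apply: le_trans (ler_norm_sum _ _ _) _.
have : \sum_(i < k) `|HH k y i.+1| <= \sum_(i < k) (3 * `|(1 - 3 * y)^-1|).
  by apply: ler_sum => i _; exact: HH_bound hphi hU _ (ltn_ord i).
by move=> h; apply: le_trans h _; rewrite sumr_const card_ord (mulr_natl (3 * `|(1 - 3 * y)^-1|) k).
Qed.

Unset Implicit Arguments.
Local Open Scope classical_set_scope.
Local Open Scope ring_scope.

Theorem theorem1 (R : realType) (k : nat) (hk : (2 <= k)%N) (t : R) (ht : t != 1) :
  exists2 d : R, 0 < d &
    forall x : R, 0 < `|x| < d ->
      let y := x * (t - 1) in
      let phi := (1 - y) / (2 * y) in
      let gamma := k%:R / (1 - 3 * y)
                   - 2 * y / (1 - 3 * y) ^+ 2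
                     * ((chebU k phi - chebU k.-1 phi - 1) / chebU k phi) in
      [/\ 1 - 3 * y != 0, chebU k phi != 0, 1 - x * gamma != 0 &
          ((fun N : nat => \sum_(n < N) Fcoef k n t * x ^+ n) @ \oo
            --> (1 - x * gamma)^-1)].
Proof.
set a0 := 1 + `|t|.
set T1 := `|t - 1|.
set K := k%:R : R.
have hK : 2 <= K by rewrite /K (ler_nat R 2 k).
have ha0 : 1 <= a0 by rewrite /a0 lerDl normr_ge0.
have hT1 : 0 <= T1 by exact: normr_ge0.
set D := 12 * K * a0 * (T1 + 1).
have hD : 0 < D.
  rewrite /D; apply: mulr_gt0; last by lra.
  apply: mulr_gt0; last by lra.
  apply: mulr_gt0; lra.
exists (1 / D); first by rewrite divr_gt0 // ltr01.
move=> x /andP [hx0 hxd] y phi gamma.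
set X := `|x| in hx0 hxd.
have hXD : X * D < 1 by rewrite -ltr_pdivlMr.
have hKa : 2 <= K * a0.
  have : K * 1 <= K * a0 by apply: ler_wpM2l; lra.
  lra.
have hX0 : 0 <= X by lra.
set Z := X * (T1 + 1).
have hZ0 : 0 <= Z by rewrite /Z; apply: mulr_ge0; lra.
have hXDZ : X * D = 12 * (K * a0) * Z by rewrite /D /Z; ring.
have hZ : Z < 1 / 24.
  have : 24 * Z <= 12 * (K * a0) * Z.
    apply: ler_wpM2r => //; lra.
  lra.
have hy_n : `|y| = X * T1 by rewrite /y normrM.
have hyZ : `|y| <= Z.
  rewrite hy_n /Z mulrDr mulr1; lra.
have hy0 : y != 0.
  rewrite /y mulf_neq0 //; first by rewrite -normr_gt0.
  by rewrite subr_eq0.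
have h3n : 1 - 3 * `|y| <= `|1 - 3 * y|.
  have := lerB_dist 1 (3 * y); rewrite normr1 normrM normr_nat; lra.
have h3 : 1 - 3 * y != 0.
  by rewrite -normr_gt0; lra.
have hphi : 1 <= `|phi|.
  rewrite /phi normf_div normrM normr_nat ler_pdivlMr; last first.
    by apply: mulr_gt0; [lra | rewrite normr_gt0].
  have := lerB_dist 1 y; rewrite normr1; lra.
have hU : chebU k phi != 0.
  by rewrite -normr_gt0; apply: lt_le_trans (cheb_ge1 _ hphi); rewrite ltr01.
have Eg : gamma = gam k y by [].
have hc : `|(1 - 3 * y)^-1| <= 2.
  have hp : 0 < `|1 - 3 * y| by lra.
  rewrite normfV -[_^-1]mul1r ler_pdivrMr //; lra.
have hgam := gam_bound hk hy0 h3 hphi hU.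
have hq : X * K * a0 < 1 / 12.
  have : X * K * a0 <= (X * K * a0) * (T1 + 1).
    rewrite ler_peMr //; [apply: mulr_ge0; [apply: mulr_ge0|]|]; lra.
  have : X * D = 12 * ((X * K * a0) * (T1 + 1)) by rewrite /D; ring.
  lra.
have hXK : X * K <= X * K * a0.
  rewrite ler_peMr //; apply: mulr_ge0; lra.
have hxg : `|x * gamma| < 1 / 2.
  rewrite Eg normrM -/X.
  have : X * `|gam k y| <= X * (K * (3 * 2)).
    apply: ler_wpM2l => //; apply: le_trans hgam _.
    apply: ler_wpM2l; first lra.
    apply: ler_wpM2l; lra.
  lra.
have hL : 1 - x * gamma != 0.
  rewrite -normr_gt0.
  have := lerB_dist 1 (x * gamma); rewrite normr1; lra.
split => //.
rewrite Eg in hL *.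
rewrite -cvg_shiftS.
apply/cvgrPdist_le => eps heps.
have hB := SS_bound hk hy0 h3 hU hL.
set B := \sum_j `|gg t x j| in hB.
have hB0 : 0 <= B by apply: sumr_ge0 => j _; exact: normr_ge0.
set q := `|x| * k%:R * (1 + `|t|) in hB.
have hq0 : 0 <= q by rewrite /q -/X -/K -/a0; apply: mulr_ge0; [apply: mulr_ge0|]; lra.
have hq1 : `|q| < 1 by rewrite ger0_norm // /q -/X -/K -/a0; lra.
have hcv := cvg_expr hq1.
have hKB : 0 <= K * B by apply: mulr_ge0; lra.
have hC : 0 < K * B + 1 by lra.
near=> n.
have hn : `|q ^+ n| <= eps / (K * B + 1).
  by near: n; exact: (cvgr0_norm_le _ hcv _ (divr_gt0 heps hC)).
rewrite /=.
have hn0 : 0 <= q ^+ n by exact: exprn_ge0.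
rewrite ger0_norm // in hn.
apply: le_trans (hB n) _.
rewrite -/K.
have e1 : K * (q ^+ n * B) = (K * B) * q ^+ n by ring.
rewrite e1.
have : (K * B) * q ^+ n <= (K * B) * (eps / (K * B + 1)).
  apply: ler_wpM2l => //; apply: mulr_ge0; lra.
have : (K * B) * (eps / (K * B + 1)) <= eps.
  rewrite mulrA ler_pdivrMr // [eps * _]mulrC mulrDl mul1r lerDl; lra.
lra.
Unshelve. all: by end_near.
Qed.
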